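(* Let $\mathbf{z}:\mathcal{U}\to\mathcal{Z}$ be a $C^1$ diffeomorphism onto a convex set $\mathcal{Z}$ with inverse $\mathbf{z}\mapsto\mathbf{u}(\mathbf{z})$, and let $\Phi(s;\mathbf{u}_L,\mathbf{u}_R):=\mathbf{u}\big(\mathbf{z}_L+s[\![\mathbf{z}]\!]\big)$ be the path that is linear in $\mathbf{z}$. Let $\bar{\mathbf{B}}^\pm:\mathcal{U}\times\mathcal{U}\to\mathbb{R}^{n\times n}$ be $C^1$ with (a) $2\bar{\mathbf{B}}^\pm(\mathbf{u},\mathbf{u})=\mathbf{B}(\mathbf{u})\,\mathbf{u}_{\mathbf{z}}(\mathbf{z}(\mathbf{u}))$; (b) $\bar{\mathbf{B}}^-(\mathbf{u}_R,\mathbf{u}_L)=\bar{\mathbf{B}}^+(\mathbf{u}_L,\mathbf{u}_R)$; (c) $\bar{\mathbf{B}}^-(\mathbf{u}_L,\mathbf{u}_R)+\bar{\mathbf{B}}^+(\mathbf{u}_L,\mathbf{u}_R)=\int_0^1\mathbf{B}(\Phi(s))\,\mathbf{u}_{\mathbf{z}}(\mathbf{z}_L+s[\![\mathbf{z}]\!])\,ds$; and let $\mathbf{f}^*:\mathcal{U}\times\mathcal{U}\to\mathbb{R}^n$ be $C^1$, consistent ($\mathbf{f}^*(\mathbf{u},\mathbf{u})=\mathbf{f}(\mathbf{u})$) and symmetric ($\mathbf{f}^*(\mathbf{u}_L,\mathbf{u}_R)=\mathbf{f}^*(\mathbf{u}_R,\mathbf{u}_L)$), such that for all $\mathbf{u}_L,\mathbf{u}_R$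 (d) $[\![q-\mathbf{w}^T\mathbf{f}]\!]=\mathbf{w}_R^T\bar{\mathbf{B}}^+(\mathbf{u}_L,\mathbf{u}_R)[\![\mathbf{z}]\!]+\mathbf{w}_L^T\bar{\mathbf{B}}^-(\mathbf{u}_L,\mathbf{u}_R)[\![\mathbf{z}]\!]-[\![\mathbf{w}]\!]^T\mathbf{f}^*(\mathbf{u}_L,\mathbf{u}_R)$. Then the fluctuations $$\mathbf{D}^-(\mathbf{u}_L,\mathbf{u}_R)=\bar{\mathbf{B}}^-(\mathbf{u}_L,\mathbf{u}_R)[\![\mathbf{z}]\!]+\mathbf{f}^*(\mathbf{u}_L,\mathbf{u}_R)-\mathbf{f}(\mathbf{u}_L),\qquad \mathbf{D}^+(\mathbf{u}_L,\mathbf{u}_R)=\bar{\mathbf{B}}^+(\mathbf{u}_L,\mathbf{u}_R)[\![\mathbf{z}]\!]+\mathbf{f}(\mathbf{u}_R)-\mathbf{f}^*(\mathbf{u}_L,\mathbf{u}_R)$$ are entropy conservative fluctuations, i.e. satisfy (C1)–(C5) with respect to the path $\Phi$.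
   Context: System: $\mathbf{u}_t+\mathbf{f}(\mathbf{u})_x+\mathbf{B}(\mathbf{u})\mathbf{u}_x=0$, $\mathbf{u}\in\mathcal{U}\subset\mathbb{R}^n$, with $C^1$ flux $\mathbf{f}$ and continuous $\mathbf{B}$, generalized Jacobian $\mathbf{A}:=\mathbf{f}_{\mathbf{u}}+\mathbf{B}$. Entropy pair: strictly convex $C^2$ $S$ and entropy flux $q$ with $q_{\mathbf{u}}=\mathbf{w}^T(\mathbf{f}_{\mathbf{u}}+\mathbf{B})$, $\mathbf{w}(\mathbf{u}):=S_{\mathbf{u}}(\mathbf{u})$. Notation: $[\![\cdot]\!]=(\cdot)_R-(\cdot)_L$; $\mathbf{w}_L=\mathbf{w}(\mathbf{u}_L)$, $\mathbf{z}_L=\mathbf{z}(\mathbf{u}_L)$, $q_L=q(\mathbf{u}_L)$, etc. EC fluctuation conditions, for all $\mathbf{u},\mathbf{u}_L,\mathbf{u}_R$ and a given family of paths $\Phi(s;\mathbf{u}_L,\mathbf{u}_R)$: (C1) $\mathbf{D}^\pm(\mathbf{u},\mathbf{u})=0$; (C2) $\mathbf{D}^-(\mathbf{u}_L,\mathbf{u}_R)+\mathbf{D}^+(\mathbf{u}_L,\mathbf{u}_R)=\int_0^1\mathbf{A}(\Phi(s;\mathbf{u}_L,\mathbf{u}_R))\partial_s\Phi(s;\mathbf{u}_L,\mathbf{u}_R)\,ds$; (C3) $\mathbf{D}^-(\mathbf{u}_L,\mathbf{u}_R)+\mathbf{D}^+(\mathbf{u}_R,\mathbf{u}_L)=0$;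 (C4) $\mathbf{w}_L^T\mathbf{D}^-(\mathbf{u}_L,\mathbf{u}_R)+\mathbf{w}_R^T\mathbf{D}^+(\mathbf{u}_L,\mathbf{u}_R)=q_R-q_L$; (C5) $\frac{\partial\mathbf{D}^-(\mathbf{u}_L,\mathbf{u}_R)}{\partial\mathbf{u}_R}\big|_{\mathbf{u}_R=\mathbf{u}_L}=\frac12\mathbf{A}(\mathbf{u}_L)$. *)

(* Defs.v *)
From HB Require Import structures.
From mathcomp Require Import all_boot all_order all_algebra.
From mathcomp Require Import all_classical all_reals all_analysis.
Set Implicit Arguments. Unset Strict Implicit. Unset Printing Implicit Defensive.
Import Order.TTheory GRing.Theory Num.Theory.
Import numFieldNormedType.Exports.
Local Open Scope classical_set_scope.
Local Open Scope ring_scope.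

(** Vectors of R^n are column vectors 'cV[R]_n; e_j := delta_mx j 0. *)

Definition dotv {R : realType} {n : nat} (a b : 'cV[R]_n) : R :=
  \sum_(i < n) a i 0 * b i 0.

Definition jac {R : realType} {n m : nat} (g : 'cV[R]_n -> 'cV[R]_m)
  (u : 'cV[R]_n) : 'M[R]_(m, n) :=
  \matrix_(i < m, j < n) ('D_(delta_mx j 0) g u) i 0.

Definition grad {R : realType} {n : nat} (g : 'cV[R]_n -> R^o)
  (u : 'cV[R]_n) : 'cV[R]_n :=
  \col_(j < n) ('D_(delta_mx j 0) g u).

Definition C1_on {R : realType} {V W : normedModType R} (D : set V)
  (g : V -> W) : Prop :=
  (forall x, D x -> differentiable g x) /\
  (forall v x, D x -> {for x, continuous ('D_v g)}).

Definition C2_on {R : realType} {V W : normedModType R} (D : set V)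
  (g : V -> W) : Prop :=
  C1_on D g /\ (forall v, C1_on D ('D_v g)).

Definition convex_set_ {R : realType} {n : nat} (Z : set 'cV[R]_n) : Prop :=
  forall a b t, Z a -> Z b -> 0 <= t <= 1 -> Z (a + t *: (b - a)).

Definition strictly_convex_on {R : realType} {n : nat} (U : set 'cV[R]_n)
  (S : 'cV[R]_n -> R) : Prop :=
  forall a b t, U a -> U b -> a != b -> 0 < t < 1 ->
    U ((1 - t) *: a + t *: b) ->
    S ((1 - t) *: a + t *: b) < (1 - t) * S a + t * S b.

Definition int01 {R : realType} (g : R -> R) : R :=
  Rintegral (@lebesgue_measure R) `[0%R, 1%R] g.

Definition mint01 {R : realType} {m n : nat} (F : R -> 'M[R]_(m, n)) : 'M[R]_(m, n) :=
  \matrix_(i < m, j < n) int01 (fun s => F s i j).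

Definition zpath {R : realType} {n : nat} (z uz : 'cV[R]_n -> 'cV[R]_n)
  (uL uR : 'cV[R]_n) (s : R) : 'cV[R]_n :=
  uz (z uL + s *: (z uR - z uL)).

Definition Dminus {R : realType} {n : nat} (z f : 'cV[R]_n -> 'cV[R]_n)
  (Bm : 'cV[R]_n -> 'cV[R]_n -> 'M[R]_n)
  (fs : 'cV[R]_n -> 'cV[R]_n -> 'cV[R]_n) (uL uR : 'cV[R]_n) : 'cV[R]_n :=
  Bm uL uR *m (z uR - z uL) + fs uL uR - f uL.

Definition Dplus {R : realType} {n : nat} (z f : 'cV[R]_n -> 'cV[R]_n)
  (Bp : 'cV[R]_n -> 'cV[R]_n -> 'M[R]_n)
  (fs : 'cV[R]_n -> 'cV[R]_n -> 'cV[R]_n) (uL uR : 'cV[R]_n) : 'cV[R]_n :=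
  Bp uL uR *m (z uR - z uL) + f uR - fs uL uR.

(* Main.v *)
Require Import Defs.
From HB Require Import structures.
From mathcomp Require Import all_boot all_order all_algebra.
From mathcomp Require Import all_classical all_reals all_analysis.
From mathcomp Require Import ring lra.
Import Order.TTheory GRing.Theory Num.Theory.
Import numFieldNormedType.Exports.
Local Open Scope classical_set_scope.
Local Open Scope ring_scope.


Section H.
Context {R : realType}.

Lemma diff_id' (V : normedModType R) (x : V) : differentiable id x.
Proof. exact: ex_diff. Qed.

Lemma differentiable_mx (V : normedModType R) m k (M : V -> 'M[R]_(m,k)) x :
  (forall i j, differentiable (fun y => M y i j) x) -> differentiable M x.
Proof.
move=> H.
have -> : M = \sum_(i < m) (fun y => \sum_(j < k) M y i j *: delta_mx i j).
  by apply/funext => y; rewrite fct_sumE; apply: matrix_sum_delta.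
apply: differentiable_sum => i.
rewrite -(fct_sumE _ _ (fun j y => M y i j *: delta_mx i j)).
apply: differentiable_sum => j.
exact: differentiableZl.
Qed.

Lemma differentiable_entry (V : normedModType R) m k (M : V -> 'M[R]_(m,k)) x i j :
  differentiable M x -> differentiable (fun y => M y i j) x.
Proof.
move=> dM; apply: (@differentiable_comp _ _ _ _ M (fun N : 'M[R]_(m,k) => N i j)) => //.
exact: differentiable_coord.
Qed.

Lemma differentiable_mulmx (V : normedModType R) m p k (M : V -> 'M[R]_(m,p))
  (N : V -> 'M[R]_(p,k)) x :
  differentiable M x -> differentiable N x -> differentiable (fun y => M y *m N y) x.
Proof.
move=> dM dN; apply: differentiable_mx => i j.
have -> : (fun y => (M y *m N y) i j) =
   \sum_(l < p) (fun y => M y i l * N y l j).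
  by apply/funext => y; rewrite fct_sumE mxE.
apply: differentiable_sum => l.
by apply: differentiableM; apply: differentiable_entry.
Qed.

Lemma derive_entry (V : normedModType R) m k (M : V -> 'M[R]_(m,k)) x v i j :
  derivable M x v -> ('D_v M x) i j = 'D_v (fun y => M y i j) x.
Proof. by move=> dM; rewrite derive_mx // mxE. Qed.

Lemma deriveMmx (V : normedModType R) m p k (M : V -> 'M[R]_(m,p))
  (N : V -> 'M[R]_(p,k)) x v :
  derivable M x v -> derivable N x v ->
  'D_v (fun y => M y *m N y) x = 'D_v M x *m N x + M x *m 'D_v N x.
Proof.
move=> dM dN.
have dE : forall i j, derivable (fun y => (M y *m N y) i j) x v.
  move=> i j.
  have -> : (fun y => (M y *m N y) i j) =
     \sum_(l < p) (fun y => M y i l * N y l j).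
    by apply/funext => y; rewrite fct_sumE mxE.
  apply: derivable_sum => l; apply: derivableM.
  by move/derivable_mxP: dM. by move/derivable_mxP: dN.
rewrite derive_mx; last by apply/derivable_mxP.
apply/matrixP => i j; rewrite !mxE.
have -> : (fun y => (M y *m N y) i j) =
   \sum_(l < p) (fun y => M y i l * N y l j).
  by apply/funext => y; rewrite fct_sumE mxE.
rewrite derive_sum; last first.
  move=> l; apply: derivableM.
  by move/derivable_mxP: dM. by move/derivable_mxP: dN.
rewrite -big_split /=; apply: eq_bigr => l _.
rewrite (_ : (fun y => M y i l * N y l j) = (fun y => M y i l) * (fun y => N y l j)) //.
rewrite deriveM; last 2 first.
  by move/derivable_mxP: dM. by move/derivable_mxP: dN.
rewrite !derive_entry // /GRing.scale /= mulrC addrC; congr (_ + _).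
by rewrite mulrC.
Qed.


Lemma mul_delta_entry m n (M : 'M[R]_(m,n)) (i : 'I_m) j :
  (M *m delta_mx j (0 : 'I_1)) i 0 = M i j.
Proof. by rewrite -colE mxE. Qed.

Lemma jac_mul n m (g : 'cV[R]_n -> 'cV[R]_m) u v :
  differentiable g u -> jac g u *m v = 'D_v g u.
Proof.
move=> dg.
rewrite deriveE //.
rewrite {2}(matrix_sum_delta v) linear_sum /=.
apply/matrixP => i k; rewrite (ord1 k) !mxE summxE.
apply: eq_bigr => j _.
rewrite big_ord1 linearZ /= mxE -deriveE // mxE mulrC.
by [].
Qed.

Lemma derive_comp' (U V W : normedModType R) (g : U -> V) (h : V -> W) x v :
  differentiable g x -> differentiable h (g x) ->
  'D_v (h \o g) x = 'D_('D_v g x) h (g x).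
Proof.
move=> dg dh.
rewrite deriveE; last exact: differentiable_comp.
by rewrite diff_comp // !deriveE.
Qed.

Lemma derive_trick (V V' W : normedModType R) (G : V -> W) (H : V' -> W) x x' v v' :
  (forall h : R, G (h *: v + x) = H (h *: v' + x')) -> G x = H x' ->
  'D_v G x = 'D_v' H x' /\ (derivable G x v <-> derivable H x' v').
Proof.
move=> eh e0.
have E : (fun h : R => h^-1 *: ((G \o shift x) (h *: v) - G x)) =
         (fun h : R => h^-1 *: ((H \o shift x') (h *: v') - H x')).
  by apply/funext => h /=; rewrite eh e0.
by rewrite /derive /derivable E.
Qed.

Lemma dotvD n (a b c : 'cV[R]_n) : dotv a (b + c) = dotv a b + dotv a c.
Proof. by rewrite /dotv -big_split; apply: eq_bigr => i _; rewrite mxE mulrDr. Qed.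
Lemma dotvB n (a b c : 'cV[R]_n) : dotv a (b - c) = dotv a b - dotv a c.
Proof. by rewrite /dotv -sumrB; apply: eq_bigr => i _; rewrite !mxE mulrBr. Qed.
Lemma dotvBl n (a b c : 'cV[R]_n) : dotv (a - b) c = dotv a c - dotv b c.
Proof. by rewrite /dotv -sumrB; apply: eq_bigr => i _; rewrite !mxE mulrBl. Qed.

End H.


Section C5.
Context {R : realType} {n : nat}.
Implicit Types (U : set 'cV[R]_n).

Lemma nbhs_open U u : open U -> U u -> \forall y \near u, U y.
Proof. by rewrite openE => oU Uu; exact: oU. Qed.
Arguments nbhs_open {U u}.

Lemma derive_trickE (V V' W : normedModType R) (G : V -> W) (H : V' -> W) x x' v v' :
  (forall h : R, G (h *: v + x) = H (h *: v' + x')) -> G x = H x' ->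
  'D_v G x = 'D_v' H x'.
Proof. move=> a b; by have [] := @derive_trick R V V' W G H x x' v v' a b. Qed.

Lemma jinv U (z uz : 'cV[R]_n -> 'cV[R]_n) u : open U -> U u ->
  differentiable z u -> differentiable uz (z u) ->
  (forall u, U u -> uz (z u) = u) -> jac uz (z u) *m jac z u = 1%:M.
Proof.
move=> oU Uu dz duz uzK.
apply/matrixP => i j.
rewrite -mul_delta_entry -mulmxA jac_mul // jac_mul // -derive_comp' //.
rewrite (@near_eq_derive _ _ _ _ id); last first.
  by move: (nbhs_open oU Uu); apply: filterS => y Uy /=; rewrite uzK.
by rewrite derive_id !mxE eqxx andbT.
Qed.

Lemma fs_half U (f : 'cV[R]_n -> 'cV[R]_n) (fs : 'cV[R]_n -> 'cV[R]_n -> 'cV[R]_n) u :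
  open U -> U u ->
  differentiable (fun p : 'cV[R]_n * 'cV[R]_n => fs p.1 p.2) (u, u) ->
  (forall u, U u -> fs u u = f u) ->
  (forall uL uR, U uL -> U uR -> fs uL uR = fs uR uL) ->
  differentiable (fs u) u /\
  forall v, 'D_v (fs u) u = 2^-1 *: 'D_v f u.
Proof.
move=> oU Uu dF fsd fssym.
set F := (fun p : 'cV[R]_n * 'cV[R]_n => fs p.1 p.2) in dF.
have dfs : differentiable (fs u) u.
  have -> : fs u = F \o (fun y => (u, y)) by [].
  by apply: differentiable_comp.
split => // v.
have E1 : 'D_v (fs u) u = 'D_(0, v) F (u, u).
  apply: (@derive_trickE _ _ _ (fs u) F u (u,u) v (0,v)) => //.
  by move=> h; rewrite /F /= scaler0 add0r.
have E2 : 'D_v (fun y => fs y u) u = 'D_(v, 0) F (u, u).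
  apply: (@derive_trickE _ _ _ _ F u (u,u) v (v,0)) => //.
  by move=> h; rewrite /F /= scaler0 add0r.
have E3 : 'D_v f u = 'D_(v, v) F (u, u).
  rewrite (@near_eq_derive _ _ _ _ (fun y => fs y y)); last first.
    by move: (nbhs_open oU Uu); apply: filterS => y Uy /=; rewrite fsd.
  by apply: (@derive_trickE _ _ _ _ F u (u,u) v (v,v)).
have E4 : 'D_(v, v) F (u, u) = 'D_(v, 0) F (u, u) + 'D_(0, v) F (u, u).
  rewrite !deriveE // -linearD; congr ('d F (u, u) _).
  by rewrite [RHS](_ : _ = (v + 0, 0 + v)) // addr0 add0r.
have E5 : 'D_v (fun y => fs y u) u = 'D_v (fs u) u.
  apply: near_eq_derive.
  by move: (nbhs_open oU Uu); apply: filterS => y Uy /=; rewrite fssym.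
rewrite E3 E4 -E2 E5 E1.
rewrite scalerDr -scalerDl (_ : 2^-1 + 2^-1 = 1 :> R) ?scale1r //; lra.
Qed.

End C5.


Section C5b.
Context {R : realType} {n : nat}.

Lemma jacE (g : 'cV[R]_n -> 'cV[R]_n) u i j :
  jac g u i j = ('D_(delta_mx j 0) g u) i 0.
Proof. by rewrite mxE. Qed.

Lemma C5_main (U Z : set 'cV[R]_n) (f : 'cV[R]_n -> 'cV[R]_n) (B : 'cV[R]_n -> 'M[R]_n)
  (z uz : 'cV[R]_n -> 'cV[R]_n) (Bm : 'cV[R]_n -> 'cV[R]_n -> 'M[R]_n)
  (fs : 'cV[R]_n -> 'cV[R]_n -> 'cV[R]_n) u :
  open U -> U u -> C1_on U f -> C1_on U z -> C1_on Z uz -> Z (z u) ->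
  (forall u, U u -> uz (z u) = u) ->
  differentiable (fun p : 'cV[R]_n * 'cV[R]_n => Bm p.1 p.2) (u, u) ->
  differentiable (fun p : 'cV[R]_n * 'cV[R]_n => fs p.1 p.2) (u, u) ->
  2%:R *: Bm u u = B u *m jac uz (z u) ->
  (forall u, U u -> fs u u = f u) ->
  (forall uL uR, U uL -> U uR -> fs uL uR = fs uR uL) ->
  differentiable (Dminus z f Bm fs u) u /\
  jac (Dminus z f Bm fs u) u = 2%:R^-1 *: (jac f u + B u).
Proof.
move=> oU Uu C1f C1z C1uz Zzu uzK dBp dF HBm fsd fssym.
have dfu := C1f.1 u Uu; have dzu := C1z.1 u Uu; have duz := C1uz.1 (z u) Zzu.
have [dfs Dfs] := @fs_half _ _ U f fs u oU Uu dF fsd fssym.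
have dBm : differentiable (Bm u) u.
  have -> : Bm u = (fun p : 'cV[R]_n * 'cV[R]_n => Bm p.1 p.2) \o (fun y => (u, y)) by [].
  by apply: differentiable_comp.
have dzc : differentiable (z - cst (z u)) u.
  by apply: differentiableB => //; exact: differentiable_cst.
have dG1 : differentiable (fun y => Bm u y *m (z - cst (z u)) y) u.
  exact: differentiable_mulmx.
have eD : Dminus z f Bm fs u =
   (fun y => Bm u y *m (z - cst (z u)) y) + fs u - cst (f u).
  by apply/funext => y.
have dD : differentiable (Dminus z f Bm fs u) u.
  rewrite eD; apply: differentiableB; last exact: differentiable_cst.
  exact: differentiableD.
split => //.
have Dv : forall v, 'D_v (Dminus z f Bm fs u) u =
    Bm u u *m 'D_v z u + 2^-1 *: 'D_v f u.
  move=> v; rewrite eD deriveB; last 2 first.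
  - by apply: diff_derivable; exact: differentiableD.
  - exact: derivable_cst.
  rewrite deriveD; last 2 first.
  - exact: diff_derivable.
  - exact: diff_derivable.
  rewrite derive_cst subr0 Dfs deriveMmx; last 2 first.
  - exact: diff_derivable.
  - exact: diff_derivable.
  rewrite deriveB; last 2 first.
  - exact: diff_derivable.
  - exact: derivable_cst.
  rewrite derive_cst subr0 (_ : (z - cst (z u)) u = 0) ?mulmx0 ?add0r //.
  exact: subrr.
have HB : Bm u u *m jac z u = 2^-1 *: B u.
  have -> : Bm u u = 2^-1 *: (B u *m jac uz (z u)).
    by rewrite -HBm scalerA mulVf ?pnatr_eq0 // scale1r.
  by rewrite -scalemxAl -mulmxA (@jinv _ _ U z uz u oU Uu) // mulmx1.
apply/matrixP => i j; rewrite jacE Dv -!jac_mul // mulmxA HB.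
rewrite -[RHS]mul_delta_entry; congr (_ i 0).
by rewrite -!scalemxAl mulmxDl -scalerDr addrC.
Qed.

End C5b.


Section C2a.
Context {R : realType}.

Definition ec {T : topologicalType} {m k} (s : T) (M : T -> 'M[R]_(m,k)) :=
  forall i j, {for s, continuous (fun t => M t i j)}.

Lemma ec_cont {T : topologicalType} {m k} (s : T) (M : T -> 'M[R]_(m,k)) :
  {for s, continuous M} -> ec s M.
Proof.
move=> cM i j; apply: (@continuous_comp _ _ _ M (fun N : 'M[R]_(m,k) => N i j)) => //.
exact: coord_continuous.
Qed.

Lemma ec_sum {T : topologicalType} {p} (s : T) (g : 'I_p -> T -> R) :
  (forall l, {for s, continuous (g l)}) ->
  {for s, continuous (fun t => \sum_(l < p) g l t)}.
Proof.
move=> cg; rewrite -(fct_sumE _ _ g).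
elim/big_rec: _ => [|l F _ cF]; first exact: cst_continuous.
exact: continuousD.
Qed.

Lemma ec_mul {T : topologicalType} {m p k} (s : T) (M : T -> 'M[R]_(m,p))
  (N : T -> 'M[R]_(p,k)) : ec s M -> ec s N -> ec s (fun t => M t *m N t).
Proof.
move=> cM cN i j.
have -> : (fun t => (M t *m N t) i j) = (fun t => \sum_(l < p) M t i l * N t l j).
  by apply/funext => t; rewrite mxE.
apply: ec_sum => l; exact: continuousM.
Qed.

Lemma ec_add {T : topologicalType} {m k} (s : T) (M N : T -> 'M[R]_(m,k)) :
  ec s M -> ec s N -> ec s (fun t => M t + N t).
Proof.
move=> cM cN i j.
have -> : (fun t => (M t + N t) i j) = (fun t => M t i j) + (fun t => N t i j).
  by apply/funext => t; rewrite mxE.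
exact: continuousD.
Qed.

Lemma ec_cst {T : topologicalType} {m k} (s : T) (M : 'M[R]_(m,k)) : ec s (fun _ => M).
Proof. by move=> i j; exact: cst_continuous. Qed.

Definition cont01 (g : R -> R) := forall s, 0 <= s <= 1 -> {for s, continuous g}.

Lemma cont01_within g : cont01 g -> {within `[0%R, 1%R], continuous g}.
Proof.
move=> cg; apply: continuous_in_subspaceT => s.
rewrite inE /= in_itv /= => hs; exact: cg.
Qed.

Lemma cont01_int g : cont01 g ->
  (@lebesgue_measure R).-integrable `[0%R, 1%R] (EFin \o g).
Proof.
move=> cg; apply: continuous_compact_integrable; first exact: segment_compact.
exact: cont01_within.
Qed.

Lemma int01D g h : cont01 g -> cont01 h ->
  int01 (fun s => g s + h s) = int01 g + int01 h.
Proof.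
by move=> cg ch; rewrite /int01 RintegralD //; apply: cont01_int.
Qed.

Lemma int01Mr g c : cont01 g -> int01 (fun s => g s * c) = int01 g * c.
Proof. by move=> cg; rewrite /int01 RintegralZr //; apply: cont01_int. Qed.

Lemma cont01D g h : cont01 g -> cont01 h -> cont01 (fun s => g s + h s).
Proof. by move=> cg ch s hs; apply: (continuousD (cg s hs) (ch s hs)). Qed.

Lemma int01_sum p (g : 'I_p -> R -> R) : (forall k, cont01 (g k)) ->
  int01 (fun s => \sum_(k < p) g k s) = \sum_(k < p) int01 (g k).
Proof.
move=> cg; rewrite -(fct_sumE _ _ g).
pose K (F : R -> R) (x : R) := cont01 F /\ int01 F = x.
suff : K (\sum_(k < p) g k) (\sum_(k < p) int01 (g k)) by case.
apply: (big_rec2 K).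
  split; first by move=> s _; exact: cst_continuous.
  by rewrite /int01 Rintegral_cst //= mul0r.
move=> k F x _ [cF iF]; split.
  by move=> s hs; apply: continuousD; [exact: cg|exact: cF].
rewrite -iF (_ : g k + F = (fun s => g k s + F s)); last by apply/funext.
exact: (int01D _ _ (cg k) cF).
Qed.

End C2a.


Section C2b.
Context {R : realType} {n : nat}.

Lemma addmx_entry (m k : nat) (A B : 'M[R]_(m,k)) i j : (A + B) i j = A i j + B i j.
Proof. by rewrite mxE. Qed.

Lemma C2_main (U Z : set 'cV[R]_n) (f : 'cV[R]_n -> 'cV[R]_n) (B : 'cV[R]_n -> 'M[R]_n)
  (z uz : 'cV[R]_n -> 'cV[R]_n) (Bm Bp : 'cV[R]_n -> 'cV[R]_n -> 'M[R]_n)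
  (fs : 'cV[R]_n -> 'cV[R]_n -> 'cV[R]_n) uL uR :
  C1_on U f -> {in U, continuous B} -> C1_on Z uz ->
  (forall s : R, 0 <= s <= 1 -> Z (z uL + s *: (z uR - z uL))) ->
  (forall y, Z y -> U (uz y)) ->
  uz (z uL) = uL -> uz (z uR) = uR ->
  Bm uL uR + Bp uL uR =
     mint01 (fun s => B (zpath z uz uL uR s) *m
                      jac uz (z uL + s *: (z uR - z uL))) ->
  Dminus z f Bm fs uL uR + Dplus z f Bp fs uL uR =
     mint01 (fun s => (jac f (zpath z uz uL uR s) + B (zpath z uz uL uR s)) *m
                      'D_1 (zpath z uz uL uR : R^o -> 'cV[R]_n) s).
Proof.
move=> C1f cB C1uz Zl Uuz uzL uzR Bint.
set dz := z uR - z uL.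
set l := fun s : R => z uL + s *: dz.
set Phi := zpath z uz uL uR.
have dl : forall s : R, differentiable l s.
  move=> s; apply: differentiableD; first exact: differentiable_cst.
  by apply: differentiableZl; exact: diff_id'.
have UPhi : forall s : R, 0 <= s <= 1 -> U (Phi s) by move=> s hs; exact: Uuz (Zl s hs).
have dPhi : forall s : R, 0 <= s <= 1 -> differentiable Phi s.
  move=> s hs; apply: differentiable_comp => //; exact: C1uz.1 _ (Zl s hs).
have DPhi : forall s : R, 0 <= s <= 1 -> 'D_1 Phi s = jac uz (l s) *m dz.
  move=> s hs; rewrite jac_mul; last exact: C1uz.1 _ (Zl s hs).
  apply: (@derive_trickE _ _ _ _ Phi uz s (l s) 1 dz) => // h.
  rewrite /Phi /zpath /l -/dz (_ : h%:A = h); last by rewrite -[RHS]mulr1.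
  by rewrite scalerDl addrCA.
have cl : forall s : R, {for s, continuous l}.
  by move=> s; apply: differentiable_continuous.
have cPhi : forall s : R, 0 <= s <= 1 -> {for s, continuous Phi}.
  by move=> s hs; apply: differentiable_continuous; exact: dPhi.
have cJuz : forall s : R, 0 <= s <= 1 -> ec s (fun t => jac uz (l t)).
  move=> s hs k j.
  have -> : (fun t => jac uz (l t) k j) =
     (fun N : 'cV[R]_n => N k 0) \o ('D_(delta_mx j 0) uz) \o l.
    by apply/funext => t; rewrite /= mxE.
  apply: continuous_comp; first exact: cl.
  apply: continuous_comp; [exact: C1uz.2 _ _ (Zl s hs)|exact: coord_continuous].
have cJf : forall s : R, 0 <= s <= 1 -> ec s (fun t => jac f (Phi t)).
  move=> s hs k j.
  have -> : (fun t => jac f (Phi t) k j) =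
     (fun N : 'cV[R]_n => N k 0) \o ('D_(delta_mx j 0) f) \o Phi.
    by apply/funext => t; rewrite /= mxE.
  apply: continuous_comp; first exact: cPhi.
  apply: continuous_comp; [exact: C1f.2 _ _ (UPhi s hs)|exact: coord_continuous].
have cBP : forall s : R, 0 <= s <= 1 -> ec s (fun t => B (Phi t)).
  move=> s hs; apply: ec_cont; apply: continuous_comp; first exact: cPhi.
  apply: cB; rewrite inE; exact: UPhi.
have cg1 : forall i, cont01 (fun s => (jac f (Phi s) *m (jac uz (l s) *m dz)) i 0).
  by move=> i s hs; exact: (ec_mul _ _ _ (cJf s hs) (ec_mul _ _ _ (cJuz s hs) (ec_cst s dz)) i 0).
have cM : forall i k, cont01 (fun s => (B (Phi s) *m jac uz (l s)) i k).
  by move=> i k s hs; exact: (ec_mul _ _ _ (cBP s hs) (cJuz s hs) i k).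
have Phi1 : Phi 1 = uR by rewrite /Phi /zpath scale1r addrC subrK.
have Phi0 : Phi 0 = uL by rewrite /Phi /zpath scale0r addr0.
have ftc : forall i,
    int01 (fun s => (jac f (Phi s) *m (jac uz (l s) *m dz)) i 0) =
    f uR i 0 - f uL i 0.
  move=> i.
  set g1 := (fun s => (jac f (Phi s) *m (jac uz (l s) *m dz)) i 0).
  set F := fun s : R => f (Phi s) i 0.
  have dfP : forall s : R, 0 <= s <= 1 -> differentiable (f \o Phi) s.
    move=> s hs; apply: differentiable_comp; [exact: dPhi | exact: C1f.1 _ (UPhi s hs)].
  have dF : forall s : R, 0 <= s <= 1 -> differentiable F s.
    move=> s hs; have -> : F = (fun N : 'cV[R]_n => N i 0) \o (f \o Phi) by [].
    apply: differentiable_comp; first exact: dfP.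
    exact: differentiable_coord.
  have h01 : 0 <= (0:R) <= 1 by apply/andP; split; lra.
  have h11 : 0 <= (1:R) <= 1 by apply/andP; split; lra.
  have Hd : derivable_oo_LRcontinuous F 0 1.
    split.
    - move=> s; rewrite in_itv /= => /andP[s0 s1]; apply: diff_derivable.
      by apply: dF; rewrite !ltW.
    - by apply: cvg_at_right_filter; apply: differentiable_continuous; exact: dF.
    - by apply: cvg_at_left_filter; apply: differentiable_continuous; exact: dF.
  have HF : {in `]0, 1[%R, F^`()%classic =1 g1}.
    move=> s; rewrite in_itv /= => /andP[s0 s1].
    have hs : 0 <= s <= 1 by rewrite !ltW.
    rewrite derive1E /F /g1.
    rewrite -(@derive_entry _ _ _ _ (f \o Phi)); last exact: diff_derivable (dfP s hs).
    rewrite derive_comp'; [|exact: dPhi|exact: C1f.1 _ (UPhi s hs)].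
    by rewrite -jac_mul ?DPhi //; exact: C1f.1 _ (UPhi s hs).
  have H := continuous_FTC2 ltr01 (cont01_within _ (cg1 i)) Hd HF.
  by rewrite /int01 /Rintegral H -EFinB /= /F Phi1 Phi0.
have cg2 : forall i, cont01 (fun s => ((B (Phi s) *m jac uz (l s)) *m dz) i 0).
  by move=> i s hs; exact: (ec_mul _ _ _ (ec_mul _ _ _ (cBP s hs) (cJuz s hs)) (ec_cst s dz) i 0).
have int2 : forall i,
    int01 (fun s => ((B (Phi s) *m jac uz (l s)) *m dz) i 0) =
    (mint01 (fun s => B (Phi s) *m jac uz (l s)) *m dz) i 0.
  move=> i.
  rewrite (_ : (fun s => ((B (Phi s) *m jac uz (l s)) *m dz) i 0) =
     (fun s => \sum_(k < n) (fun k s => (B (Phi s) *m jac uz (l s)) i k * dz k 0) k s));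
     last by apply/funext => s; rewrite mxE.
  rewrite int01_sum; last first.
    move=> k s hs; apply: continuousM; [exact: cM | exact: cst_continuous].
  rewrite mxE; apply: eq_bigr => k _; rewrite int01Mr; last exact: cM.
  by rewrite /mint01; congr (_ * _); rewrite mxE.
have eq01 : forall g h : R -> R, (forall s, 0 <= s <= 1 -> g s = h s) ->
    int01 g = int01 h.
  move=> g h gh; apply: eq_Rintegral => s; rewrite inE /= in_itv /=; exact: gh.
rewrite (_ : Dminus z f Bm fs uL uR + Dplus z f Bp fs uL uR =
   (Bm uL uR + Bp uL uR) *m dz + (f uR - f uL)); last first.
  rewrite /Dminus /Dplus -/dz mulmxDl.
  apply/matrixP => i j; rewrite !mxE; ring.
rewrite Bint; apply/matrixP => i j; rewrite (ord1 j).
rewrite [in RHS]/mint01 [in RHS]mxE.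
rewrite (eq01 _ (fun s => (jac f (Phi s) *m (jac uz (l s) *m dz)) i 0 +
                          ((B (Phi s) *m jac uz (l s)) *m dz) i 0)); last first.
  move=> s hs; rewrite DPhi // mulmxDl -(mulmxA (B (Phi s))).
  by rewrite (addmx_entry _ _ (jac f (Phi s) *m (jac uz (l s) *m dz))).
rewrite int01D; [|exact: cg1|exact: cg2].
rewrite ftc int2 [LHS]mxE addrC; congr (_ + _).
by rewrite !mxE.
Qed.

End C2b.


Theorem theorem3 (R : realType) (n : nat) (U Z : set 'cV[R]_n)
  (f : 'cV[R]_n -> 'cV[R]_n) (B : 'cV[R]_n -> 'M[R]_n)
  (S : 'cV[R]_n -> R^o) (q : 'cV[R]_n -> R^o)
  (z uz : 'cV[R]_n -> 'cV[R]_n)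
  (Bm Bp : 'cV[R]_n -> 'cV[R]_n -> 'M[R]_n)
  (fs : 'cV[R]_n -> 'cV[R]_n -> 'cV[R]_n) :
  (* standing assumptions on the system and the entropy pair *)
  open U ->
  C1_on U f ->
  {in U, continuous B} ->
  strictly_convex_on U S -> C2_on U S ->
  (forall u, U u -> differentiable q u) ->
  (forall u, U u -> (grad q u)^T = (grad S u)^T *m (jac f u + B u)) ->
  (* z : U -> Z is a C^1 diffeomorphism onto the convex set Z, inverse uz *)
  z @` U = Z -> convex_set_ Z ->
  C1_on U z -> C1_on Z uz ->
  (forall u, U u -> uz (z u) = u) ->
  (forall y, Z y -> z (uz y) = y) ->
  (* hypotheses on Bbar^+- *)
  C1_on (U `*` U) (fun p => Bm p.1 p.2) ->
  C1_on (U `*` U) (fun p => Bp p.1 p.2) ->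
  (forall u, U u -> 2%:R *: Bm u u = B u *m jac uz (z u)) ->
  (forall u, U u -> 2%:R *: Bp u u = B u *m jac uz (z u)) ->
  (forall uL uR, U uL -> U uR -> Bm uR uL = Bp uL uR) ->
  (forall uL uR, U uL -> U uR ->
     Bm uL uR + Bp uL uR =
     mint01 (fun s => B (zpath z uz uL uR s) *m
                      jac uz (z uL + s *: (z uR - z uL)))) ->
  (* hypotheses on f^* *)
  C1_on (U `*` U) (fun p => fs p.1 p.2) ->
  (forall u, U u -> fs u u = f u) ->
  (forall uL uR, U uL -> U uR -> fs uL uR = fs uR uL) ->
  (forall uL uR, U uL -> U uR ->
     (q uR - dotv (grad S uR) (f uR)) - (q uL - dotv (grad S uL) (f uL)) =
     dotv (grad S uR) (Bp uL uR *m (z uR - z uL))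
     + dotv (grad S uL) (Bm uL uR *m (z uR - z uL))
     - dotv (grad S uR - grad S uL) (fs uL uR)) ->
  (* conclusion: (C1)-(C5) *)
  let Dm := Dminus z f Bm fs in
  let Dp := Dplus z f Bp fs in
  let A := fun u => jac f u + B u in
  (forall u, U u -> Dm u u = 0 /\ Dp u u = 0) /\
  (forall uL uR, U uL -> U uR ->
     Dm uL uR + Dp uL uR =
     mint01 (fun s => A (zpath z uz uL uR s) *m
                      'D_1 (zpath z uz uL uR : R^o -> 'cV[R]_n) s)) /\
  (forall uL uR, U uL -> U uR -> Dm uL uR + Dp uR uL = 0) /\
  (forall uL uR, U uL -> U uR ->
     dotv (grad S uL) (Dm uL uR) + dotv (grad S uR) (Dp uL uR) = q uR - q uL) /\
  (forall uL, U uL ->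
     differentiable (Dm uL) uL /\ jac (Dm uL) uL = 2%:R^-1 *: A uL).
Proof.
move=> oU C1f cB scS C2S dq hq zUZ cZ C1z C1uz uzK zuK C1Bm C1Bp Bmd Bpd BmBp
  Bint C1fs fsd fssym hd Dm Dp A.
have Zz : forall u, U u -> Z (z u) by move=> u Uu; rewrite -zUZ; exists u.
have Uuz : forall y, Z y -> U (uz y).
  by move=> y; rewrite -zUZ => -[u Uu <-]; rewrite uzK.
split.
  move=> u Uu; rewrite /Dm /Dp /Dminus /Dplus subrr !mulmx0 !add0r fsd //.
  by rewrite !subrr.
split.
  move=> uL uR UL UR.
  rewrite /Dm /Dp /A; apply: C2_main.
  - exact: C1f.
  - exact: cB.
  - exact: C1uz.
  - move=> s hs; apply: cZ; [exact: Zz|exact: Zz|exact: hs].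
  - exact: Uuz.
  - exact: uzK.
  - exact: uzK.
  - exact: Bint.
split.
  move=> uL uR UL UR.
  rewrite /Dm /Dp /Dminus /Dplus -(BmBp uR uL) // (fssym uR uL) //.
  rewrite -(opprB (z uR)) mulmxN.
  apply/matrixP => i j; rewrite !mxE; ring.
split.
  move=> uL uR UL UR; have := hd uL uR UL UR.
  rewrite /Dm /Dp /Dminus /Dplus !dotvB !dotvD !dotvBl => H; lra.
move=> uL UL.
rewrite /Dm /A; apply: C5_main.
- exact: oU.
- exact: UL.
- exact: C1f.
- exact: C1z.
- exact: C1uz.
- exact: Zz.
- exact: uzK.
- by apply: C1Bm.1.
- by apply: C1fs.1.
- exact: Bmd.
- exact: fsd.
- exact: fssym.
Qed.
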